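(* Let $\Lambda$ be a strongly connected finite $k$-graph and let $M$ be the Borel probability measure on $\Lambda^\infty$ with $M(Z(\lambda))=\rho(\Lambda)^{-d(\lambda)}x^\Lambda_{s(\lambda)}$ for all $\lambda\in\Lambda$. For $m,n\in\mathbb{N}^k$, \[M(\{x\in\Lambda^\infty:\sigma^m(x)=\sigma^n(x)\})=\begin{cases}1&\text{if }m-n\in\operatorname{Per}\Lambda,\\0&\text{otherwise.}\end{cases}\]
   Context: A $k$-graph is a countable category $\Lambda$ with a functor $d:\Lambda\to\mathbb{N}^k$ such that whenever $d(\lambda)=m+n$ there are unique $\mu,\nu$ with $d(\mu)=m$, $d(\nu)=n$, $\lambda=\mu\nu$. $\Lambda^n=d^{-1}(n)$, $\Lambda^0$ = vertices, $r,s$ range and source. Standing convention: $\Lambda^{e_i}\neq\emptyset$ for each $i$. Finite: each $\Lambda^n$ finite; strongly connected: $v\Lambda w\neq\emptyset$ for all vertices. Coordinate matrices $A_i(v,w)=|v\Lambda^{e_i}w|$, $\rho(\Lambda)^n=\prod_i\rho(A_i)^{n_i}$ (spectral radii). $x^\Lambda$ is the unique vector in $[0,\infty)^{\Lambda^0}$ with $\sum_vx^\Lambda_v=1$ and $A_ix^\Lambda=\rho(A_i)x^\Lambda$ for all $i$. (A unique such Borel probability measure $M$ exists.) Infinite paths: degree-preserving functors $x:\Omega_k\to\Lambda$, $\Omega_k=\{(m,n)\in\mathbb{N}^k\times\mathbb{N}^k:m\le n\}$ with $r(m,n)=(m,m)$, $s(m,n)=(n,n)$, $(m,n)(n,p)=(m,p)$,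 $d(m,n)=n-m$; $\Lambda^\infty$ their set, with the topology generated by the compact open sets $Z(\lambda)=\{x:x(0,d(\lambda))=\lambda\}$; $\sigma^n(x)(p,q)=x(n+p,n+q)$. $\operatorname{Per}\Lambda=\{m-n:\sigma^m(x)=\sigma^n(x)\ \forall x\in\Lambda^\infty\}$. *)

(* Defs.v *)
From HB Require Import structures.
From mathcomp Require Import all_boot all_order all_algebra finmap.
From mathcomp Require Import all_classical all_reals all_analysis.
From mathcomp Require complex.

Set Implicit Arguments.
Unset Strict Implicit.
Unset Printing Implicit Defensive.

Import Order.TTheory GRing.Theory Num.Theory.
Local Open Scope classical_set_scope.

Definition Nk (k : nat) := {ffun 'I_k -> nat}.
Definition zerok (k : nat) : Nk k := [ffun => 0%N].
Definition addk k (m n : Nk k) : Nk k := [ffun i => (m i + n i)%N].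
Definition subk k (m n : Nk k) : Nk k := [ffun i => (m i - n i)%N].
Definition lek k (m n : Nk k) : bool := [forall i, (m i <= n i)%N].
Definition ek k (i : 'I_k) : Nk k := [ffun j => nat_of_bool (j == i)].

(* k-graphs: a countable category (objects = vertices, here a finite  *)
(* type; morphisms = paths) with a degree functor d : Λ -> N^k having *)
(* the unique factorisation property.  Composition is a total function *)
(* only constrained on composable pairs (s a = r b); kcomp a b = a b.  *)
Record kgraph (k : nat) := KGraph {
  kvert : finType;
  kmor : countType;
  kr : kmor -> kvert;
  ks : kmor -> kvert;
  kid : kvert -> kmor;
  kcomp : kmor -> kmor -> kmor;
  kdeg : kmor -> Nk k;
  kr_id : forall v, kr (kid v) = v;
  ks_id : forall v, ks (kid v) = v;
  kr_comp : forall a b, ks a = kr b -> kr (kcomp a b) = kr a;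
  ks_comp : forall a b, ks a = kr b -> ks (kcomp a b) = ks b;
  kcompA : forall a b c, ks a = kr b -> ks b = kr c ->
    kcomp a (kcomp b c) = kcomp (kcomp a b) c;
  kcomp_idl : forall a, kcomp (kid (kr a)) a = a;
  kcomp_idr : forall a, kcomp a (kid (ks a)) = a;
  kdeg_id : forall v, kdeg (kid v) = zerok k;
  kdeg_comp : forall a b, ks a = kr b ->
    kdeg (kcomp a b) = addk (kdeg a) (kdeg b);
  kfactor : forall l (m n : Nk k), kdeg l = addk m n ->
    exists! p : kmor * kmor,
      [/\ kdeg p.1 = m, kdeg p.2 = n, ks p.1 = kr p.2 & l = kcomp p.1 p.2]
}.

Section KGraphDefs.
Variables (k : nat) (G : kgraph k).
Local Notation V := (kvert G).
Local Notation Lam := (kmor G).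

Definition kfinite : Prop :=
  forall n : Nk k, finite_set [set l : Lam | kdeg l = n].

Definition kstrongly_connected : Prop :=
  forall v w : V, exists l : Lam, kr l = v /\ ks l = w.

Definition kno_empty_generators : Prop :=
  forall i : 'I_k, exists l : Lam, kdeg l = ek i.

Definition coord_mx (i : 'I_k) (v w : V) : nat :=
  #|` fset_set [set l : Lam | [/\ kdeg l = ek i, kr l = v & ks l = w]] |.

Import complex.
Local Open Scope ring_scope.

Definition is_eigenvalue (R : realType) (A : V -> V -> nat) (z : R[i]) : Prop :=
  exists u : V -> R[i], (exists v, u v != 0) /\
    forall v, \sum_(w : V) (A v w)%:R * u w = z * u v.

Definition is_spectral_radius (R : realType) (A : V -> V -> nat) (r : R) : Prop :=
  (exists z : R[i], is_eigenvalue A z /\ `|z| = (r%:C)%C) /\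
  (forall z : R[i], is_eigenvalue A z -> `|z| <= (r%:C)%C).

Definition Omega := {p : Nk k * Nk k | lek p.1 p.2}.

(* degree-preserving functors Ω_k -> Λ, given by their action on
   morphisms (objects (m,m) of Ω_k are identified with the identity
   morphisms (m,m)) *)
Definition is_inf_path (f : Omega -> Lam) : Prop :=
  [/\ (forall a : Omega, kdeg (f a) = subk (val a).2 (val a).1),
      (forall a b c : Omega, (val a).2 = (val b).1 ->
          val c = ((val a).1, (val b).2) ->
          ks (f a) = kr (f b) /\ kcomp (f a) (f b) = f c) &
      (forall a : Omega, (val a).1 = (val a).2 -> f a = kid (kr (f a)))].

Definition Linf := {f : Omega -> Lam | is_inf_path f}.

Definition pv (x : Linf) (m n : Nk k) : option Lam :=
  omap (proj1_sig x) (insub (m, n) : option Omega).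

Definition Zcyl (l : Lam) : set Linf :=
  [set x | pv x (zerok k) (kdeg l) = Some l].

(* σ^m(x) = σ^n(x), i.e. x(m+p, m+q) = x(n+p, n+q) for all p <= q *)
Definition shift_eq (m n : Nk k) (x : Linf) : Prop :=
  forall p q : Nk k, lek p q ->
    pv x (addk m p) (addk m q) = pv x (addk n p) (addk n q).

(* m - n ∈ Per Λ (the difference is taken in Z^k) *)
Definition in_Per (m n : Nk k) : Prop :=
  exists p q : Nk k,
    (forall i : 'I_k, (p i)%:Z - (q i)%:Z = (m i)%:Z - (n i)%:Z)%R /\
    (forall x : Linf, shift_eq p q x).

(* open sets of the topology generated by the sets Z(λ): unions of
   finite intersections of cylinder sets *)
Definition cyl_open (U : set Linf) : Prop :=
  forall x, U x -> exists s : seq Lam,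
    (forall l, l \in s -> Zcyl l x) /\
    [set y | forall l, l \in s -> Zcyl l y] `<=` U.

End KGraphDefs.
Arguments coord_mx {k} G i v w.

(* MathComp-Analysis
   measurable types must be pointed, so the carrier is equipped with a
   chosen point x0 (Λ^∞ is nonempty whenever a probability measure on it
   exists). *)
Definition LinfP k (G : kgraph k) (x0 : Linf G) : Type := Linf G.

Section LinfPInst.
Variables (k : nat) (G : kgraph k) (x0 : Linf G).
HB.instance Definition _ := gen_eqMixin (LinfP x0).
HB.instance Definition _ := gen_choiceMixin (LinfP x0).
HB.instance Definition _ := isPointed.Build (LinfP x0) x0.

Definition borel_opens : set (set (LinfP x0)) := [set U | cyl_open U].

Definition LinfBorel : measurableType _ := g_sigma_algebraType borel_opens.
End LinfPInst.

(* Main.v *)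
Require Import Defs.
From HB Require Import structures.
From mathcomp Require Import all_boot all_order all_algebra finmap.
From mathcomp Require Import all_classical all_reals all_analysis.
From mathcomp Require Import zify lra ring.
Notation kcomp := Defs.kcomp.
Set Implicit Arguments.
Unset Strict Implicit.
Unset Printing Implicit Defensive.
Import Order.TTheory GRing.Theory Num.Theory.
Local Open Scope classical_set_scope.

Lemma lekP k (m n : Nk k) : reflect (forall i, m i <= n i)%N (lek m n).
Proof. exact: forallP. Qed.

Lemma pv_some k (G : kgraph k) (x : Linf G) a b : lek a b ->
  exists l, pv x a b = Some l.
Proof.
move=> ab; rewrite /pv.
have -> : (insub (a, b) : option (Omega k)) = Some (exist _ (a,b) ab).
  by rewrite insubT.
by eexists.
Qed.

Lemma lek_trans k (a b c : Nk k) : lek a b -> lek b c -> lek a c.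
Proof.
move=> /lekP h1 /lekP h2; apply/lekP => i; exact: leq_trans (h1 i) (h2 i).
Qed.

Lemma pvE k (G : kgraph k) (x : Linf G) a b (ab : lek a b) :
  pv x a b = Some (proj1_sig x (exist _ (a, b) ab)).
Proof. by rewrite /pv insubT /=; do 2 f_equal; apply: val_inj. Qed.

Lemma pv_deg k (G : kgraph k) (x : Linf G) a b l : pv x a b = Some l ->
  kdeg l = subk b a.
Proof.
rewrite /pv; case: insubP => //= -[[a' b'] h] _ /= [<- <-] [<-].
by case: (proj2_sig x) => H1 _ _; rewrite H1.
Qed.

Lemma pv_split k (G : kgraph k) (x : Linf G) a b c : lek a b -> lek b c ->
  exists l1 l2, [/\ pv x a b = Some l1, pv x b c = Some l2,
    pv x a c = Some (kcomp l1 l2) & ks l1 = kr l2].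
Proof.
move=> ab bc; have ac := lek_trans ab bc.
rewrite (pvE x ab) (pvE x bc) (pvE x ac).
case: (proj2_sig x) => _ H2 _.
have [h1 h2] := H2 (exist _ (a, b) ab) (exist _ (b, c) bc) (exist _ (a, c) ac)
  erefl erefl.
by do 2 eexists; split; eauto; rewrite h2.
Qed.

Lemma factor_eq k (G : kgraph k) (b1 g1 b2 g2 : kmor G) :
  ks b1 = kr g1 -> ks b2 = kr g2 -> kdeg b1 = kdeg b2 -> kdeg g1 = kdeg g2 ->
  kcomp b1 g1 = kcomp b2 g2 -> b1 = b2 /\ g1 = g2.
Proof.
move=> h1 h2 d1 d2 e.
have [[p1 p2] [_ U]] := kfactor (kdeg_comp h1).
have E1 := U (b1, g1) (And4 erefl erefl h1 erefl).
have E2 := U (b2, g2) (And4 (esym d1) (esym d2) h2 e).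
by case: (etrans (esym E1) E2).
Qed.

Lemma pv_split_eq k (G : kgraph k) (x : Linf G) a b c l1 l2 :
  lek a b -> lek b c -> ks l1 = kr l2 -> kdeg l1 = subk b a -> kdeg l2 = subk c b ->
  pv x a c = Some (kcomp l1 l2) -> pv x a b = Some l1 /\ pv x b c = Some l2.
Proof.
move=> ab bc h d1 d2 e.
have [m1 [m2 [e1 e2 e3 h']]] := pv_split x ab bc.
move: e; rewrite e3 => -[] /esym /factor_eq [] //.
- by rewrite d1 (pv_deg e1).
- by rewrite d2 (pv_deg e2).
by move=> -> ->.
Qed.

Lemma pv_seg k (G : kgraph k) (x y : Linf G) a b c a' b' c' :
  lek a b -> lek b c -> lek a' b' -> lek b' c' ->
  subk b a = subk b' a' -> subk c b = subk c' b' ->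
  pv x a c = pv y a' c' -> pv x a b = pv y a' b' /\ pv x b c = pv y b' c'.
Proof.
move=> ab bc ab' bc' d1 d2 e.
have [m1 [m2 [e1 e2 e3 h']]] := pv_split x ab bc.
have [] := pv_split_eq (x := y) ab' bc' h' _ _ (esym (etrans (esym e3) e)).
- by rewrite (pv_deg e1).
- by rewrite (pv_deg e2).
by rewrite e1 e2 => -> ->.
Qed.

Ltac nk_spec i :=
  repeat match goal with
  | H : is_true (lek _ _) |- _ => move/lekP: H => H
  end;
  repeat match goal with
  | H : forall _, _ |- _ => move: (H i); clear H
  end; rewrite ?ffunE /=; intros; lia.

Ltac nk := match goal with
  | |- @eq (Nk _) _ _ => let i := fresh "i" in apply/ffunP => i; nk_spec i
  | |- @eq {ffun _ -> nat} _ _ => let i := fresh "i" in apply/ffunP => i; nk_spec i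
  | |- is_true (lek _ _) => let i := fresh "i" in apply/lekP => i; nk_spec i
  end.

Lemma deg0_id k (G : kgraph k) (l : kmor G) : kdeg l = zerok k -> l = kid (kr l).
Proof.
move=> d.
have d' : kdeg l = addk (zerok k) (zerok k) by rewrite d; nk.
have [[p1 p2] [_ U]] := kfactor d'.
have E1 := U (kid (kr l), l) (And4 (kdeg_id _) d (ks_id _) (esym (kcomp_idl l))).
have E2 := U (l, kid (ks l)) (And4 d (kdeg_id _) (esym (kr_id _)) (esym (kcomp_idr l))).
by case: (etrans (esym E1) E2).
Qed.

Lemma edge_split k (G : kgraph k) (l : kmor G) (i : 'I_k) : (0 < kdeg l i)%N ->
  exists f l', [/\ kdeg f = ek i, kdeg l' = subk (kdeg l) (ek i),
     ks f = kr l' & l = kcomp f l'].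
Proof.
move=> h.
have d : kdeg l = addk (ek i) (subk (kdeg l) (ek i)).
  apply/ffunP => j; rewrite !ffunE; case: eqP => [->|] /=; lia.
have [[f l'] [[/= d1 d2 h1 e] _]] := kfactor d.
by exists f, l'.
Qed.

Lemma coord_ge1 k (G : kgraph k) (Hfin : kfinite G) (i : 'I_k) (f : kmor G) :
  kdeg f = ek i -> (0 < coord_mx G i (kr f) (ks f))%N.
Proof.
move=> d; rewrite /coord_mx cardfs_gt0; apply/fset0Pn; exists f.
rewrite in_fset_set; last by apply: sub_finite_set (Hfin (ek i)) => l [].
by rewrite inE.
Qed.

Local Open Scope ring_scope.

Lemma xL_pos k (G : kgraph k) (R : realType) (Hfin : kfinite G) (rho : 'I_k -> R)
  (xL : kvert G -> R) (Hx0 : forall v, 0 <= xL v)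
  (Hxeig : forall (i : 'I_k) (v : kvert G),
      \sum_(w : kvert G) (coord_mx G i v w)%:R * xL w = rho i * xL v) :
  forall l : kmor G, 0 < xL (ks l) -> 0 < xL (kr l).
Proof.
suff H : forall n (l : kmor G), (\sum_i kdeg l i <= n)%N -> 0 < xL (ks l) -> 0 < xL (kr l).
  by move=> l; apply: (H _ l).
elim=> [|n IH] l.
  rewrite leqn0 sum_nat_eq0 => /forallP h0.
  suff -> : l = kid (kr l) by rewrite ks_id kr_id.
  by apply: deg0_id; apply/ffunP => i; rewrite ffunE; apply/eqP; exact: h0.
move=> hs hpos.
have [/forallP h0|] := boolP [forall i, kdeg l i == 0%N].
  suff E : l = kid (kr l) by move: hpos; rewrite E ks_id kr_id.
  by apply: deg0_id; apply/ffunP => i; rewrite ffunE; apply/eqP; exact: h0.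
rewrite negb_forall => /existsP [i hi].
have [f [l' [d1 d2 h1 e]]] : exists f l', [/\ kdeg f = ek i, kdeg l' = subk (kdeg l) (ek i),
     ks f = kr l' & l = kcomp f l'] by apply: edge_split; rewrite lt0n.
have hl' : 0 < xL (kr l').
  apply: IH; last by rewrite e ks_comp in hpos.
  rewrite -ltnS (leq_trans _ hs) // d2.
  rewrite [X in (_ < X)%N](bigD1 i) //= [X in (X < _)%N](bigD1 i) //=.
  rewrite !ffunE eqxx.
  have -> : \sum_(j < k | j != i) subk (kdeg l) (ek i) j = \sum_(j < k | j != i) kdeg l j.
    by apply: eq_bigr => j /negbTE hj; rewrite !ffunE hj subn0.
  move: hi; rewrite -lt0n => hi; rewrite subn1 ltn_add2r; lia.
have hc := coord_ge1 Hfin d1.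
have : 0 < rho i * xL (kr f).
  rewrite -Hxeig (bigD1 (ks f)) //=.
  have r1 : 0 <= \sum_(w | w != ks f) (coord_mx G i (kr f) w)%:R * xL w.
    by apply: sumr_ge0 => w _; apply: mulr_ge0 => //; exact: ler0n.
  have r2 : 0 < (coord_mx G i (kr f) (ks f))%:R * xL (ks f).
    by apply: mulr_gt0; rewrite ?ltr0n // h1.
  lra.
rewrite e kr_comp //.
move=> h; rewrite lt_def Hx0 andbT; apply: contraTneq h => ->.
by rewrite mulr0 ltxx.
Qed.

Lemma xL_all_pos k (G : kgraph k) (R : realType) (Hfin : kfinite G)
  (Hsc : kstrongly_connected G) (rho : 'I_k -> R)
  (xL : kvert G -> R) (Hx0 : forall v, 0 <= xL v) (Hx1 : \sum_(v : kvert G) xL v = 1)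
  (Hxeig : forall (i : 'I_k) (v : kvert G),
      \sum_(w : kvert G) (coord_mx G i v w)%:R * xL w = rho i * xL v) :
  forall v, 0 < xL v.
Proof.
have [u hu] : exists u, 0 < xL u.
  apply/not_existsP => h.
  have : \sum_(v : kvert G) xL v = 0.
    apply: big1 => v _; apply/eqP; rewrite eq_le Hx0 andbT.
    by rewrite leNgt; apply/negP => /h.
  by rewrite Hx1 => /eqP; rewrite oner_eq0.
move=> v; have [l [<- hs]] := Hsc v u.
by apply: (xL_pos Hfin Hx0 Hxeig); rewrite hs.
Qed.

Lemma rho_pos k (G : kgraph k) (R : realType) (Hfin : kfinite G)
  (Hgen : kno_empty_generators G) (rho : 'I_k -> R)
  (xL : kvert G -> R) (Hx0 : forall v, 0 <= xL v) (Hxp : forall v, 0 < xL v)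
  (Hxeig : forall (i : 'I_k) (v : kvert G),
      \sum_(w : kvert G) (coord_mx G i v w)%:R * xL w = rho i * xL v) :
  forall i, 0 < rho i.
Proof.
move=> i; have [f d1] := Hgen i.
have hc := coord_ge1 Hfin d1.
have : 0 < rho i * xL (kr f).
  rewrite -Hxeig (bigD1 (ks f)) //=.
  have r1 : 0 <= \sum_(w | w != ks f) (coord_mx G i (kr f) w)%:R * xL w.
    by apply: sumr_ge0 => w _; apply: mulr_ge0 => //; exact: ler0n.
  have r2 : 0 < (coord_mx G i (kr f) (ks f))%:R * xL (ks f).
    by apply: mulr_gt0; rewrite ?ltr0n // Hxp.
  lra.
by rewrite pmulr_lgt0.
Qed.

Definition cyc k (G : kgraph k) (w : kvert G) (c : kmor G) := kr c = w /\ ks c = w.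

Lemma cyc_comp k (G : kgraph k) w (c d : kmor G) : cyc w c -> cyc w d ->
  cyc w (kcomp c d) /\ kdeg (kcomp c d) = addk (kdeg c) (kdeg d).
Proof.
move=> [c1 c2] [d1 d2]; have h : ks c = kr d by rewrite c2 d1.
by split; [split; rewrite ?kr_comp ?ks_comp | rewrite kdeg_comp].
Qed.

Lemma cyc_i k (G : kgraph k) (Hsc : kstrongly_connected G)
  (Hgen : kno_empty_generators G) w i :
  exists c : kmor G, cyc w c /\ (1 <= kdeg c i)%N.
Proof.
have [f d1] := Hgen i.
have [dl [dr ds]] := Hsc w (kr f).
have [b [br bs]] := Hsc (ks f) w.
have h1 : ks f = kr b by rewrite br.
have h2 : ks dl = kr (kcomp f b) by rewrite kr_comp.
exists (kcomp dl (kcomp f b)); split.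
  by split; rewrite ?kr_comp ?ks_comp.
rewrite kdeg_comp // kdeg_comp // d1 !ffunE eqxx; lia.
Qed.

Lemma cyc_all k (G : kgraph k) (Hsc : kstrongly_connected G)
  (Hgen : kno_empty_generators G) w :
  forall n, exists c : kmor G, cyc w c /\ forall i, (n <= kdeg c i)%N.
Proof.
have D : forall j, exists c : kmor G, cyc w c /\ forall i : 'I_k, (i < j)%N -> (1 <= kdeg c i)%N.
  elim=> [|j [c [cc hc]]].
    by exists (kid w); split; [split; rewrite ?kr_id ?ks_id|].
  have [jk|jk] := ltnP j k; last first.
    exists c; split => // i hi; apply: hc; have := ltn_ord i; lia.
  have [d [cd hd]] := cyc_i Hsc Hgen w (Ordinal jk).
  have [cc' e] := cyc_comp cc cd.
  exists (kcomp c d); split => // i hi; rewrite e ffunE.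
  have [/hc|] := ltnP i j; first lia.
  move=> ij; have -> : i = Ordinal jk by apply: val_inj => /=; lia.
  lia.
have [d [cd hd]] := D k.
elim=> [|n [c [cc hc]]].
  by exists (kid w); split; [split; rewrite ?kr_id ?ks_id|].
have [cc' e] := cyc_comp cc cd.
exists (kcomp c d); split => // i; rewrite e ffunE.
have := hc i; have := hd i (ltn_ord i); lia.
Qed.

Lemma exact_in k (G : kgraph k) (Hsc : kstrongly_connected G)
  (Hgen : kno_empty_generators G) (w : kvert G) (p : Nk k) :
  exists a : kmor G, kdeg a = p /\ ks a = w.
Proof.
have hp : forall i, (p i <= \sum_j p j)%N by move=> i; rewrite (bigD1 i) //= leq_addr.
move: hp; set s := (\sum_j p j)%N => hp; clearbody s.
have [c [[cr cs] hc]] := cyc_all Hsc Hgen w s.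
have d : kdeg c = addk (subk (kdeg c) p) p.
  apply/ffunP => i; rewrite !ffunE.
  by rewrite subnK // (leq_trans (hp i) (hc i)).
have [[c1 c2] [[/= d1 d2 h1 e] _]] := kfactor d.
by exists c2; split => //; rewrite -cs e ks_comp.
Qed.

Ltac nk_eqs i :=
  repeat match goal with
  | H : @eq (Nk ?k) _ _ |- _ =>
     move: (congr1 (fun g : {ffun 'I_k -> nat} => g i) H); clear H
  end.

Ltac nk2 := let i := fresh "i" in
  first [ apply/ffunP => i | apply/lekP => i ]; nk_eqs i; nk_spec i.

Lemma pv_sub k (G : kgraph k) (x y : Linf G) s a b e t a' b' f :
  lek s a -> lek a b -> lek b e -> lek t a' -> lek a' b' -> lek b' f ->
  subk a s = subk a' t -> subk b s = subk b' t -> subk e s = subk f t ->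
  pv x s e = pv y t f -> pv x a b = pv y a' b'.
Proof.
move=> sa ab be ta ab' bf d1 d2 d3 E.
have [E1 _] := pv_seg (lek_trans sa ab) be (lek_trans ta ab') bf d2
  ltac:(clear E; nk2) E.
have [_ E2] := pv_seg sa ab ta ab' d1 ltac:(clear E; nk2) E1.
exact: E2.
Qed.

Lemma pv_det k (G : kgraph k) (y y' : Linf G) D a b :
  pv y (zerok k) D = pv y' (zerok k) D -> lek a b -> lek b D ->
  pv y a b = pv y' a b.
Proof.
move=> E ab bD.
by apply: (pv_sub _ _ _ _ _ _ _ _ _ E); nk2.
Qed.


Definition detm k (G : kgraph k) (D : Nk k) (E : set (Linf G)) :=
  forall y y', pv y (zerok k) D = pv y' (zerok k) D -> E y -> E y'.

Lemma Zcyl_deg k (G : kgraph k) (l : kmor G) y :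
  Zcyl l y -> pv y (zerok k) (kdeg l) = Some l.
Proof. by []. Qed.

Lemma detm_open k (G : kgraph k) D (E : set (Linf G)) : detm D E -> cyl_open E.
Proof.
move=> dE y Ey; have [l e] := pv_some y (a := zerok k) (b := D) ltac:(nk2).
have dl : kdeg l = D by rewrite (pv_deg e); nk2.
exists [:: l]; split => [l'|y' /(_ l (mem_head _ _))].
  by rewrite inE => /eqP ->; rewrite /Zcyl dl.
rewrite /Zcyl dl -e => /esym e'; exact: dE e' Ey.
Qed.

Lemma Zcyl_open k (G : kgraph k) (l : kmor G) : cyl_open (Zcyl l).
Proof.
move=> y Zy; exists [:: l]; split => [l'|y' /(_ l (mem_head _ _))] //.
by rewrite inE => /eqP ->.
Qed.

Lemma cyl_meas k (G : kgraph k) (x0 : Linf G) (U : set (Linf G)) :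
  cyl_open U -> measurable (U : set (LinfBorel x0)).
Proof. by move=> h; apply: sub_sigma_algebra. Qed.

Lemma decomp k (G : kgraph k) (x0 : Linf G) (R : realType)
  (M : probability (LinfBorel x0) R) (Hfin : kfinite G) D (A : set (LinfBorel x0)) :
  measurable A ->
  M A = (\sum_(l \in [set l : kmor G | kdeg l = D]) M (A `&` Zcyl l))%E.
Proof.
move=> mA.
have eA : A = \bigcup_(l in [set l : kmor G | kdeg l = D]) (A `&` Zcyl l).
  apply/seteqP; split=> [y Ay|y [l _ [] //]].
  have [l e] := pv_some y (a := zerok k) (b := D) ltac:(nk2).
  have dl : kdeg l = D by rewrite (pv_deg e); nk2.
  by exists l => //; split => //; rewrite /Zcyl dl.
rewrite {1}eA measure_fin_bigcup //.
- 
  move=> i j /= di dj [z [[_ zi] [_ zj]]].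
  by move: zi zj; rewrite /Zcyl /mkset di dj => -> [].
- by move=> l _; apply: measurableI => //; apply: cyl_meas; apply: Zcyl_open.
Qed.

Lemma bad k (G : kgraph k) (x y : Linf G) (m n p' q' T : Nk k) mu :
  lek p' q' -> pv x (addk m p') (addk m q') <> pv x (addk n p') (addk n q') ->
  pv x (zerok k) (addk (addk m n) q') = Some mu ->
  pv y T (addk T (addk (addk m n) q')) = Some mu ->
  pv y (addk T (addk m p')) (addk T (addk m q')) <>
  pv y (addk T (addk n p')) (addk T (addk n q')).
Proof.
move=> pq ne ex ey; rewrite -ey in ex.
have E1 := pv_sub (x := x) (y := y) (s := zerok k) (e := addk (addk m n) q') (t := T)
  (f := addk T (addk (addk m n) q')) (a := addk m p') (b := addk m q')
  (a' := addk T (addk m p')) (b' := addk T (addk m q'))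
  ltac:(nk2) ltac:(nk2) ltac:(nk2) ltac:(nk2) ltac:(nk2) ltac:(nk2)
  ltac:(nk2) ltac:(nk2) ltac:(nk2) ex.
have E2 := pv_sub (x := x) (y := y) (s := zerok k) (e := addk (addk m n) q') (t := T)
  (f := addk T (addk (addk m n) q')) (a := addk n p') (b := addk n q')
  (a' := addk T (addk n p')) (b' := addk T (addk n q'))
  ltac:(nk2) ltac:(nk2) ltac:(nk2) ltac:(nk2) ltac:(nk2) ltac:(nk2)
  ltac:(nk2) ltac:(nk2) ltac:(nk2) ex.
by rewrite -E1 -E2.
Qed.

Lemma not_shift k (G : kgraph k) (x : Linf G) (m n : Nk k) : ~ shift_eq m n x ->
  exists p' q', lek p' q' /\ pv x (addk m p') (addk m q') <> pv x (addk n p') (addk n q').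
Proof.
move=> h; apply/not_existsP => h1; apply: h => p' q' pq.
have := h1 p'; move/forallNP/(_ q')/not_andP => [//|].
by move/contrapT.
Qed.

Lemma bad2 k (G : kgraph k) (x y : Linf G) (m n p' q' T : Nk k) mu :
  lek p' q' -> pv x (addk m p') (addk m q') <> pv x (addk n p') (addk n q') ->
  pv x (zerok k) (addk (addk m n) q') = Some mu ->
  pv y T (addk T (addk (addk m n) q')) = Some mu -> ~ shift_eq m n y.
Proof.
move=> pq ne ex ey sh; apply: (bad pq ne ex ey).
have := sh (addk T p') (addk T q') ltac:(nk2).
have -> : addk m (addk T p') = addk T (addk m p') by nk2.
have -> : addk m (addk T q') = addk T (addk m q') by nk2.
have -> : addk n (addk T p') = addk T (addk n p') by nk2.
by have -> : addk n (addk T q') = addk T (addk n q') by nk2.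
Qed.

Lemma S_meas k (G : kgraph k) (x0 : Linf G) (m n : Nk k) :
  measurable ([set x | shift_eq m n x] : set (LinfBorel x0)).
Proof.
have -> : [set x | shift_eq m n x] = ~` (~` [set x : Linf G | shift_eq m n x]).
  by rewrite setCK.
apply: measurableC.
suff h : cyl_open (~` [set x : Linf G | shift_eq m n x]) by exact: (@cyl_meas _ _ x0 _ h).
move=> y /= nsh.
have [p' [q' [pq ne]]] := not_shift nsh.
have [mu e] := pv_some y (a := zerok k) (b := addk (addk m n) q') ltac:(nk2).
have dmu : kdeg mu = addk (addk m n) q' by rewrite (pv_deg e); nk2.
exists [:: mu]; split => [l|y' /(_ mu (mem_head _ _))].
  by rewrite inE => /eqP ->; rewrite /Zcyl /mkset dmu.
rewrite /Zcyl /mkset => e'.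
apply: (bad2 (T := zerok k) pq ne e).
have -> : addk (zerok k) (addk (addk m n) q') = kdeg mu by rewrite dmu; nk2.
exact: e'.
Qed.

Lemma Zcyl_ne k (G : kgraph k) (R : realType) (rho : 'I_k -> R) (xL : kvert G -> R)
  (x0 : Linf G) (M : probability (LinfBorel x0) R)
  (HM : forall l : kmor G,
      M (Zcyl l) = ((\prod_(i < k) (rho i) ^- (kdeg l i)) * xL (ks l))%:E)
  (Hr : forall i, 0 < rho i) (Hxp : forall v, 0 < xL v) (l : kmor G) :
  exists y, Zcyl l y.
Proof.
case: (pselect (exists y, Zcyl l y)) => // h.
have e : Zcyl l = set0 by apply/seteqP; split => y //= zy; apply: h; exists y.
have hp : 0 < (\prod_(i < k) (rho i) ^- (kdeg l i)) * xL (ks l).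
  apply: mulr_gt0 => //; apply: prodr_gt0 => i _.
  by rewrite invr_gt0 exprn_gt0.
have := HM l; rewrite e measure0 => -[] h0.
by rewrite -h0 ltxx in hp.
Qed.

Lemma part2 k (G : kgraph k) (R : realType) (rho : 'I_k -> R) (xL : kvert G -> R)
  (Hsc : kstrongly_connected G) (Hgen : kno_empty_generators G)
  (x0 : Linf G) (M : probability (LinfBorel x0) R)
  (HM : forall l : kmor G,
      M (Zcyl l) = ((\prod_(i < k) (rho i) ^- (kdeg l i)) * xL (ks l))%:E)
  (Hr : forall i, 0 < rho i) (Hxp : forall v, 0 < xL v) (m n : Nk k) :
  in_Per G m n -> forall y : Linf G, shift_eq m n y.
Proof.
move=> [p [q [hpq hsh]]] y; case: (pselect (shift_eq m n y)) => // nsh; exfalso.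
have [p' [q' [pq ne]]] := not_shift nsh.
have [mu e] := pv_some y (a := zerok k) (b := addk (addk m n) q') ltac:(nk2).
have dmu : kdeg mu = addk (addk m n) q' by rewrite (pv_deg e); nk2.
have [al [dal sal]] := exact_in Hsc Hgen (kr mu) p.
have [z zZ] := Zcyl_ne HM Hr Hxp (kcomp al mu).
move: zZ; rewrite /Zcyl /mkset kdeg_comp // dal => zZ.
have [_ ez] := pv_split_eq (x := z) (a := zerok k) (b := p) (c := addk p (kdeg mu))
  (l1 := al) (l2 := mu) ltac:(nk2) ltac:(nk2) sal
  ltac:(rewrite dal; nk2) ltac:(nk2) zZ.
rewrite dmu in ez.
have := bad (T := p) pq ne e ez.
have := hsh z (addk m p') (addk m q') ltac:(nk2).
have -> : addk q (addk m p') = addk p (addk n p') by nk2.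
by have -> : addk q (addk m q') = addk p (addk n q') by nk2.
Qed.
Lemma bern (R : realFieldType) (d : R) (J : nat) : 0 <= d -> d <= 1 ->
  (1 - d) ^+ J * (1 + J%:R * d) <= 1.
Proof.
move=> d0 d1; elim: J => [|J IH]; first by rewrite expr0 mul0r addr0 mulr1.
rewrite exprS -mulrA.
move: IH; set c := (1 - d) ^+ J => IH.
have c0 : 0 <= c by rewrite exprn_ge0 // subr_ge0.
have j0 : 0 <= J%:R :> R by rewrite ler0n.
have h : 0 <= c * (d * d * (J%:R + 1)).
  by apply: mulr_ge0 => //; apply: mulr_ge0; [apply: mulr_ge0|lra].
rewrite -natr1 /=.
have -> : (1 - d) * (c * (1 + (J%:R + 1) * d)) = c * (1 + J%:R * d) - c * (d * d * (J%:R + 1)).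
  by ring.
lra.
Qed.

Lemma geo0 (R : realType) (r d : R) : 0 <= r -> 0 < d -> d <= 1 ->
  (forall J : nat, r <= (1 - d) ^+ J) -> r = 0.
Proof.
move=> r0 d0 d1 h; apply/eqP; rewrite eq_le r0 andbT; rewrite leNgt; apply/negP => rp.
have x0 : 0 <= (r * d)^-1 by rewrite invr_ge0 mulr_ge0 // ltW.
have := archi_boundP x0; set J := Num.Def.archi_bound _ => hJ.
have hb := @bern R d J (ltW d0) d1.
have hr := h J.
have q : 0 <= 1 + J%:R * d by rewrite addr_ge0 // mulr_ge0 ?ler0n // ltW.
have : r * (1 + J%:R * d) <= 1.
  apply: le_trans hb; apply: ler_wpM2r => //.
have rd : 0 < r * d by rewrite mulr_gt0.
move: hJ; rewrite -div1r ltr_pdivrMr // => hJ.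
nra.
Qed.

Lemma exists_delta (T : finType) (R : realType) (f : T -> R) :
  (forall t, 0 < f t) -> exists d, [/\ 0 < d, d <= 1 & forall t, d <= f t].
Proof.
move=> fp.
suff [d [d0 d1 hd]] : exists d, [/\ 0 < d, d <= 1 & forall t, t \in enum T -> d <= f t].
  by exists d; split => // t; apply: hd; rewrite mem_enum.
elim: (enum T) => [|a s [d [d0 d1 hd]]]; first by exists 1; split.
exists (Num.min d (f a)); split.
- by rewrite lt_min d0 fp.
- by rewrite ge_min d1.
- move=> t; rewrite inE => /orP [/eqP ->|/hd h]; first by rewrite ge_min lexx orbT.
  by rewrite ge_min h.
Qed.

Lemma prod_split k (R : realType) (rho : 'I_k -> R) (a b : Nk k) :
  \prod_(i < k) rho i ^- (addk a b i) =
  (\prod_(i < k) rho i ^- (a i)) * (\prod_(i < k) rho i ^- (b i)).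
Proof.
rewrite -big_split; apply: eq_bigr => i _ /=.
by rewrite ffunE exprD invfM.
Qed.

Lemma part3 k (G : kgraph k) (R : realType) (rho : 'I_k -> R) (xL : kvert G -> R)
  (Hfin : kfinite G) (Hsc : kstrongly_connected G)
  (x0 : Linf G) (M : probability (LinfBorel x0) R)
  (HM : forall l : kmor G,
      M (Zcyl l) = ((\prod_(i < k) (rho i) ^- (kdeg l i)) * xL (ks l))%:E)
  (Hr : forall i, 0 < rho i) (Hxp : forall v, 0 < xL v) (m n : Nk k) :
  ~ in_Per G m n -> M [set x | shift_eq m n x] = 0%E.
Proof.
move=> nP.
have [x nsh] : exists x : Linf G, ~ shift_eq m n x.
  case: (pselect (exists x : Linf G, ~ shift_eq m n x)) => // h; exfalso.
  apply: nP; exists m, n; split => // y.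
  by case: (pselect (shift_eq m n y)) => // h'; exfalso; apply: h; exists y.
have [p' [q' [pq ne]]] := not_shift nsh.
set N := addk (addk m n) q'.
have [mu e] := pv_some x (a := zerok k) (b := N) ltac:(nk2).
have dmu : kdeg mu = N by rewrite (pv_deg e); nk2.
have [ga hga] := choice (fun v => Hsc v (kr mu)).
pose nu v := kcomp (ga v) mu.
have hcomp v : ks (ga v) = kr mu by case: (hga v).
have dnu v : kdeg (nu v) = addk (kdeg (ga v)) N by rewrite kdeg_comp // dmu.
have rnu v : kr (nu v) = v by rewrite kr_comp //; case: (hga v).
have snu v : ks (nu v) = ks mu by rewrite ks_comp.
have [L hL] : exists L : Nk k, forall v i, (kdeg (nu v) i <= L i)%N.
  exists [ffun i => \sum_v kdeg (nu v) i] => v i; rewrite ffunE.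
  by rewrite (bigD1 v) //= leq_addr.
have enu v : nu v = kcomp (ga v) mu by [].
clearbody nu.
pose tJ (j : nat) : Nk k := [ffun i => j * L i]%N.
pose succ j (y : Linf G) := exists v, pv y (tJ j) (addk (tJ j) (kdeg (nu v))) = Some (nu v).
pose E J := [set y : Linf G | forall j, (j < J)%N -> ~ succ j y].
have SE J : [set y | shift_eq m n y] `<=` E J.
  move=> y /= sh j _ [v ev].
  have dv := dnu v; have dg := dmu.
  have [_ ey] := pv_split_eq (x := y) (a := tJ j) (b := addk (tJ j) (kdeg (ga v)))
    (c := addk (tJ j) (kdeg (nu v))) (l1 := ga v) (l2 := mu)
    ltac:(nk2) ltac:(nk2) (hcomp v) ltac:(nk2) ltac:(nk2) ltac:(by rewrite -enu).
  apply: (bad2 (T := addk (tJ j) (kdeg (ga v))) pq ne e _ sh).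
  rewrite -ey; congr pv; nk2.
have detE J : detm (tJ J) (E J).
  move=> y y' ey Ey j jJ [v ev]; apply: (Ey j jJ); exists v.
  have hjL : forall i, (j * L i + L i <= J * L i)%N.
    move=> i; have := leq_mul jJ (leqnn (L i)); rewrite mulSn; lia.
  have hLv := hL v.
  by rewrite (pv_det ey _ _) ?ev //; nk2.
have mE J : measurable (E J : set (LinfBorel x0)).
  exact: (@cyl_meas _ _ x0 _ (detm_open (detE J))).
have mZ l : measurable (Zcyl l : set (LinfBorel x0)).
  exact: (@cyl_meas _ _ x0 _ (@Zcyl_open _ _ l)).
pose P (d : Nk k) := \prod_(i < k) rho i ^- (d i).
have P0 d : 0 < P d by apply: prodr_gt0 => i _; rewrite invr_gt0 exprn_gt0.
have [de [de0 de1 hde]] := @exists_delta (kvert G) R (fun v => P (kdeg (nu v)) * xL (ks mu) / xL v)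
  ltac:(by move=> v; rewrite divr_gt0 // mulr_gt0).
have EJS J : E J.+1 `<=` E J.
  by move=> y Ey j jJ; apply: Ey; apply: ltnW.
have step J : (M (E J.+1) <= (1 - de)%:E * M (E J))%E.
  rewrite (decomp M Hfin (tJ J) (mE J.+1)) (decomp M Hfin (tJ J) (mE J)).
  rewrite ge0_mule_fsumr; last by move=> l; exact: measure_ge0.
  apply: lee_fsum; first exact: Hfin.
  move=> l /= dl.
  case: (pselect (exists y, E J y /\ Zcyl l y)) => [[y0 [Ey0 Zy0]]|no]; last first.
    have e0 : E J `&` Zcyl l = set0.
      by apply/seteqP; split => y //= [Ey Zy]; apply: no; exists y.
    have e1 : E J.+1 `&` Zcyl l = set0.
      by apply/seteqP; split => y //= [/EJS Ey Zy]; apply: no; exists y.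
    by rewrite e0 e1 measure0 mule0.
  have ZE : Zcyl l `<=` E J.
    move=> y' Zy'; apply: (detE J y0 y') Ey0.
    by move: Zy0 Zy'; rewrite /Zcyl /mkset dl => -> ->.
  rewrite (setIidr ZE).
  set v := ks l.
  have hw : ks l = kr (nu v) by rewrite rnu.
  set w := kcomp l (nu v).
  have dw : kdeg w = addk (tJ J) (kdeg (nu v)) by rewrite kdeg_comp // dl.
  have Zw y' : Zcyl w y' -> Zcyl l y' /\ succ J y'.
    rewrite /Zcyl /mkset dw => Zw.
    have [h1 h2] := pv_split_eq (x := y') (a := zerok k) (b := tJ J)
      (c := addk (tJ J) (kdeg (nu v))) (l1 := l) (l2 := nu v)
      ltac:(nk2) ltac:(nk2) hw ltac:(rewrite dl; nk2) ltac:(nk2) Zw.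
    by split; [rewrite dl | exists v].
  have sub : E J.+1 `&` Zcyl l `<=` Zcyl l `\` Zcyl w.
    move=> y' [Ey' Zy']; split => // /Zw [_ sc].
    exact: (Ey' J (ltnSn J)).
  have Zwl : Zcyl w `<=` Zcyl l by move=> y' /Zw [].
  have mI : measurable (E J.+1 `&` Zcyl l : set (LinfBorel x0)) by exact: measurableI.
  have mD : measurable (Zcyl l `\` Zcyl w : set (LinfBorel x0)) by exact: measurableD.
  apply: (le_trans (le_measure M _ _ sub)); rewrite ?inE //.
  have fin : (M (Zcyl l) < +oo)%E by rewrite HM ltry.
  rewrite measureD //.
  rewrite (setIidr Zwl).
  have e1 := HM l; have e2 := HM w.
  move: e1 e2 => /= -> ->.
  rewrite -EFinB -EFinM lee_fin.
  rewrite kdeg_comp // prod_split /w ks_comp // snu -/v.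
  have := hde v; rewrite /= ler_pdivlMr // => h.
  have := P0 (kdeg l); rewrite /P => hP.
  move: h; rewrite /P; nra.
have bound J : (M (E J) <= ((1 - de) ^+ J)%:E)%E.
  elim: J => [|J IH].
    by rewrite expr0; exact: probability_le1 (mE 0%N).
  apply: (le_trans (step J)); rewrite exprS EFinM.
  by apply: lee_wpmul2l => //; rewrite lee_fin subr_ge0.
have mS := @S_meas _ G x0 m n.
have hS J : (M [set x | shift_eq m n x] <= ((1 - de) ^+ J)%:E)%E.
  apply: le_trans (bound J); apply: (le_measure M) => //; rewrite ?inE //.
have finS : M [set x | shift_eq m n x] \is a fin_num.
  rewrite ge0_fin_numE ?measure_ge0 //.
  by apply: (le_lt_trans (hS 0%N)); rewrite ltry.
rewrite -(fineK finS); congr EFin.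
apply: (geo0 _ de0 de1).
  by apply: fine_ge0; exact: measure_ge0.
by move=> J; rewrite -lee_fin fineK.
Qed.


Theorem proposition8p2 (k : nat) (G : kgraph k) (R : realType)
  (Hfin : kfinite G) (Hsc : kstrongly_connected G)
  (Hgen : kno_empty_generators G)
  (rho : 'I_k -> R)
  (Hrho : forall i : 'I_k, is_spectral_radius (coord_mx G i) (rho i))
  (xL : kvert G -> R)
  (Hx0 : forall v, 0 <= xL v) (Hx1 : \sum_(v : kvert G) xL v = 1)
  (Hxeig : forall (i : 'I_k) (v : kvert G),
      \sum_(w : kvert G) (coord_mx G i v w)%:R * xL w = rho i * xL v)
  (x0 : Linf G) (M : probability (LinfBorel x0) R)
  (HM : forall l : kmor G,
      M (Zcyl l) = ((\prod_(i < k) (rho i) ^- (kdeg l i)) * xL (ks l))%:E)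
  (m n : Nk k) :
  measurable ([set x | shift_eq m n x] : set (LinfBorel x0)) /\
  (in_Per G m n -> M [set x | shift_eq m n x] = 1%E) /\
  (~ in_Per G m n -> M [set x | shift_eq m n x] = 0%E).
Proof.
split; first exact: S_meas.
have Hxp := xL_all_pos Hfin Hsc Hx0 Hx1 Hxeig.
have Hr := rho_pos Hfin Hgen Hx0 Hxp Hxeig.
split.
- move=> hP.
  have -> : [set x | shift_eq m n x] = [set: LinfBorel x0].
    by apply/seteqP; split => // y _; exact: (part2 Hsc Hgen HM Hr Hxp hP).
  exact: probability_setT.
- exact: (part3 Hfin Hsc HM Hr Hxp).
Qed.
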